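(* Let $G=(V,E)$ be a finite perfect graph with vertex cost function $w:V\to\mathbb{Q}_+$, and consider the investment management game on $G$ (defined in the context). A function $y:\mathcal{M}\to\mathbb{Q}_+$ on the set $\mathcal{M}$ of maximal cliques of $G$ is a core imputation of this game if and only if $y$ is an optimal solution of the linear program $$ \text{minimize } \sum_{Q\in\mathcal{M}} y_Q \quad\text{subject to}\quad \sum_{Q\in\mathcal{M}:\, v\in Q} y_Q \ge w_v \ \ \forall v\in V,\qquad y_Q\ge 0\ \ \forall Q\in\mathcal{M}. $$
   Context: A graph $G$ is perfect if for every $S\subseteq V$ the induced subgraph $G(S)$ satisfies $\omega(G(S))=\chi(G(S))$ (clique number equals chromatic number). A stable (independent) set is a set of pairwise non-adjacent vertices. The investment management game on $G$ with costs $w$: vertices are assets, and each maximal clique of $G$ is an investment firm; $\mathcal{M}$ denotes the set of maximal cliques. Every subset $S\subseteq V$ is a scenario, and $\mathrm{cost}(S)$ is the maximum of $\sum_{v\in I} w_v$ over stable sets $I$ of the induced subgraph $G(S)$. The total money is $T=\mathrm{cost}(V)$. An imputation is a function $y:\mathcal{M}\to\mathbb{Q}_+$ with $\sum_{Q\in\mathcal{M}} y_Q = T$. For a scenario $S$, $\mathrm{money}(S)=\sum_{Q\in\mathcal{M}:\, Q\cap S\neq\emptyset} y_Q$. An imputation $y$ is in the core (is a core imputation) if $\mathrm{money}(S)\ge \mathrm{cost}(S)$ for every $S\subseteq V$. *)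

(* Defs.v *)
From HB Require Import structures.
From mathcomp Require Import all_boot all_order all_algebra.
Set Implicit Arguments. Unset Strict Implicit. Unset Printing Implicit Defensive.
Import Order.TTheory GRing.Theory Num.Theory.
Local Open Scope ring_scope.

Section Graph.
Variables (T : finType) (e : rel T).

(* simple graph: e symmetric and irreflexive (hypotheses of the theorem) *)

Definition clique (K : {set T}) : bool :=
  [forall x in K, forall y in K, (x != y) ==> e x y].

Definition stable (I : {set T}) : bool :=
  [forall x in I, forall y in I, ~~ e x y].

Definition omega (S : {set T}) : nat :=
  \max_(K : {set T} | clique K && (K \subset S)) #|K|.

Definition colorable (S : {set T}) (k : nat) : bool :=
  [exists f : {ffun T -> 'I_(#|T|.+1)},
     [forall x in S, (f x < k)%N] &&
     [forall x in S, forall y in S, e x y ==> (f x != f y)]].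

(* chromatic number of G(S): least k such that G(S) is k-colourable
   (G(S) is always #|T|-colourable, so the bound #|T| is never spurious) *)
Definition chi (S : {set T}) : nat :=
  \big[minn/#|T|]_(k < #|T|.+1 | colorable S k) (k : nat).

Definition perfect : Prop := forall S : {set T}, omega S = chi S.

Definition maxclique (Q : {set T}) : bool :=
  clique Q && [forall v, (v \notin Q) ==> ~~ clique (v |: Q)].

Definition MC := {Q : {set T} | maxclique Q}.

Variable w : T -> rat.

Definition cost (S : {set T}) : rat :=
  \big[Num.max/0]_(I : {set T} | stable I && (I \subset S)) \sum_(v in I) w v.

Definition total : rat := cost [set: T].

Definition money (y : MC -> rat) (S : {set T}) : rat :=
  \sum_(Q : MC | val Q :&: S != set0) y Q.

Definition imputation (y : MC -> rat) : Prop :=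
  (forall Q, 0 <= y Q) /\ \sum_(Q : MC) y Q = total.

Definition core_imputation (y : MC -> rat) : Prop :=
  imputation y /\ forall S : {set T}, cost S <= money y S.

Definition lp_feasible (y : MC -> rat) : Prop :=
  (forall Q, 0 <= y Q) /\ forall v : T, w v <= \sum_(Q : MC | v \in val Q) y Q.

Definition lp_optimal (y : MC -> rat) : Prop :=
  lp_feasible y /\
  forall z : MC -> rat, lp_feasible z -> \sum_(Q : MC) y Q <= \sum_(Q : MC) z Q.

End Graph.

(* Main.v *)
Require Import Defs.
From HB Require Import structures.
From mathcomp Require Import all_boot all_order all_algebra.
Import Order.TTheory GRing.Theory Num.Theory.
Set Implicit Arguments. Unset Strict Implicit. Unset Printing Implicit Defensive.
Section Comb.
Variables (T : finType) (e : rel T).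
Hypothesis e_irr : irreflexive e.

Definition wsum (m : T -> nat) (A : {set T}) : nat := \sum_(x in A) m x.
Definition womega (m : T -> nat) : nat := \max_(K : {set T} | clique e K) wsum m K.
Definition walpha (m : T -> nat) : nat := \max_(I : {set T} | stable e I) wsum m I.
Definition cov (L : seq {set T}) (x : T) : nat := count (fun I : {set T} => x \in I) L.

Lemma clique_stable_card (K I : {set T}) : clique e K -> stable e I -> #|K :&: I| <= 1.
Proof.
move=> /forallP cK /forallP sI.
rewrite leqNgt; apply/negP => /card_gt1P [x [y [/setIP [xK xI] /setIP [yK yI] nxy]]].
have := cK x; rewrite xK /= => /forallP /(_ y); rewrite yK nxy /= => exy.
have := sI x; rewrite xI /= => /forallP /(_ y); rewrite yI exy.
by [].
Qed.

Lemma sum_in_set1 (K : {set T}) (x : T) : \sum_(y in K) (y == x : nat) = (x \in K).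
Proof.
rewrite (big_mkcond (fun y => y \in K)) /= (bigD1 x) //= big1 ?addn0.
  by case: (x \in K); rewrite ?eqxx.
by move=> y /negbTE ->; case: (y \in K).
Qed.

Lemma sum_cov_clique (L : seq {set T}) (K : {set T}) : all (stable e) L -> clique e K ->
  \sum_(y in K) cov L y <= size L.
Proof.
elim: L => [|I L IH] /=.
  by move=> _ _; rewrite big1.
move=> /andP [sI sL] cK.
rewrite big_split /= addnC -addn1 leq_add ?IH //.
apply: leq_trans (clique_stable_card cK sI).
rewrite -sum1_card big_mkcond /= [X in (_ <= X)%N]big_mkcond /=.
apply: leq_sum => y _; rewrite in_setI.
by case: (y \in K); case: (y \in I).
Qed.

End Comb.

Section R.
Variables (T : finType) (e : rel T).
Hypothesis e_irr : irreflexive e.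
Hypothesis e_perf : perfect e.

Definition coverable (m : T -> nat) (k : nat) :=
  exists L : seq {set T}, [/\ all (stable e) L, size L <= k & forall x, m x <= cov L x].

Lemma colorable_full (S : {set T}) : colorable e S #|T|.
Proof.
apply/existsP; exists [ffun x => widen_ord (leqnSn _) (enum_rank x)].
apply/andP; split; apply/forallP => x; apply/implyP => _.
  by rewrite ffunE /= ltn_ord.
apply/forallP => y; apply/implyP => _; apply/implyP => exy.
rewrite !ffunE; apply/negP => /eqP [] /val_inj /enum_rank_inj exy'.
by move: exy; rewrite exy' e_irr.
Qed.

Lemma chi_col (S : {set T}) : colorable e S (chi e S).
Proof.
rewrite /chi; apply: (big_ind (colorable e S)) => //.
- exact: colorable_full.
- by move=> a b Ha Hb; case: (leqP a b).
Qed.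

Lemma base_cov (m : T -> nat) : (forall y, m y <= 1) -> coverable m (womega e m).
Proof.
move=> m1.
set S := [set y | 0 < m y].
have := chi_col S; rewrite -e_perf => /existsP [f /andP [/forallP fS /forallP fP]].
exists [seq [set x in S | val (f x) == c] | c <- iota 0 (omega e S)]; split.
- apply/allP => I /mapP [c _ ->].
  apply/forallP => x; apply/implyP; rewrite inE => /andP [xS /eqP fx].
  apply/forallP => y; apply/implyP; rewrite inE => /andP [yS /eqP fy].
  apply/negP => exy.
  have := fP x; rewrite xS /= => /forallP /(_ y); rewrite yS exy /=.
  by rewrite -val_eqE fx fy eqxx.
- rewrite size_map size_iota.
  apply/bigmax_leqP => K /andP [cK KS].
  apply: leq_trans (leq_bigmax_cond _ cK).
  rewrite /wsum -sum1_card leq_sum // => x xK.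
  by move: (subsetP KS x xK); rewrite inE.
- move=> x; case: (posnP (m x)) => [-> //| mx].
  apply: leq_trans (m1 x) _.
  rewrite /cov -has_count; apply/hasP.
  have xS : x \in S by rewrite inE.
  exists [set y in S | val (f y) == val (f x)]; last by rewrite inE xS eqxx.
  apply/mapP; exists (val (f x)) => //.
  rewrite mem_iota /= add0n.
  by have := fS x; rewrite xS.
Qed.

End R.

Section R2.
Variables (T : finType) (e : rel T).
Hypothesis e_irr : irreflexive e.
Hypothesis e_perf : perfect e.

Lemma lt_pred a b : a < b -> a <= b.-1.
Proof. by case: b. Qed.

Lemma sum_lt (A : {set T}) (m1 m2 : T -> nat) x : x \in A ->
  (forall y, m1 y <= m2 y) -> m1 x < m2 x -> wsum m1 A < wsum m2 A.
Proof.
move=> xA le12 lt12; rewrite /wsum (bigD1 x) // [X in _ < X](bigD1 x) //=.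
by rewrite -addSn leq_add // leq_sum.
Qed.

Lemma sum_ltT (m1 m2 : T -> nat) x :
  (forall y, m1 y <= m2 y) -> m1 x < m2 x -> \sum_y m1 y < \sum_y m2 y.
Proof.
move=> le12 lt12; rewrite (bigD1 x) // [X in _ < X](bigD1 x) //=.
by rewrite -addSn leq_add // leq_sum.
Qed.

Lemma sum_le (A : {set T}) (m1 m2 : T -> nat) :
  (forall y, y \in A -> m1 y <= m2 y) -> wsum m1 A <= wsum m2 A.
Proof. by move=> h; rewrite /wsum leq_sum. Qed.

Lemma le_sumT (m : T -> nat) y : m y <= \sum_x m x.
Proof. by rewrite (bigD1 y) //= leq_addr. Qed.

Lemma stable1 x : stable e [set x].
Proof.
apply/forallP => a; apply/implyP; rewrite inE => /eqP ->.
apply/forallP => b; apply/implyP; rewrite inE => /eqP ->.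
by rewrite e_irr.
Qed.

Lemma replication (m : T -> nat) : coverable e m (womega e m).
Proof.
move: {2}(\sum_x m x) (leqnn (\sum_x m x)) => n.
elim: n m => [|n IH] m hm.
  apply: base_cov => // y; apply: leq_trans (le_sumT m y) _.
  by apply: leq_trans hm _.
case: (boolP [forall y, m y <= 1]) => [/forallP|]; first exact: base_cov.
rewrite negb_forall => /existsP [x]; rewrite -ltnNge => mx2.
pose m' := fun y => if y == x then (m x).-1 else m y.
have mm' : forall y, m y = m' y + (y == x).
  move=> y; rewrite /m'; case: eqP => [->|_]; last by rewrite addn0.
  by rewrite addn1 prednK // (leq_trans _ mx2).
have m'le : forall y, m' y <= m y by move=> y; rewrite mm' leq_addr.
have summ' : \sum_y m' y < \sum_y m y.
  apply: (@sum_ltT m' m x m'le); rewrite /m' eqxx prednK //.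
  exact: leq_trans _ mx2.
have [L [sL szL cL]] := IH m' (leq_trans summ' hm).
set k := womega e m' in szL.
have wsum_m K : wsum m K = wsum m' K + (x \in K).
  by rewrite /wsum (eq_bigr _ (fun y _ => mm' y)) big_split /= sum_in_set1.
have omono : k <= womega e m.
  apply/bigmax_leqP => K cK; apply: leq_trans (leq_bigmax_cond _ cK).
  exact: sum_le.
case: (boolP [exists K, [&& clique e K, x \in K & k <= wsum m' K]]).
  move/existsP => [K /and3P [cK xK hK]].
  exists ([set x] :: L); split.
  - by rewrite /= stable1.
  - apply: leq_trans (leq_bigmax_cond _ cK).
    by rewrite wsum_m xK addn1 ltnS (leq_trans szL hK).
  - move=> y; rewrite mm' /cov /= in_set1 addnC leq_add //.
rewrite negb_exists => /forallP nK.
have : 0 < cov L x.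
  apply: leq_trans (cL x); rewrite /m' eqxx -ltnS prednK //.
  exact: leq_trans _ mx2.
rewrite /cov -has_count => /hasP [A AL xA].
have pL := perm_to_rem AL.
set L' := rem A L in pL.
have covL y : cov L y = (y \in A) + cov L' y by rewrite /cov (permP pL).
move: sL; rewrite (perm_all _ pL) /= => /andP [sA sL'].
have szL' : size L = (size L').+1 := perm_size pL.
pose m'' := fun y => m' y - ((y \in A) && (y != x)).
have hom : womega e m'' <= k.-1.
  apply/bigmax_leqP => K cK.
  case xK: (x \in K).
    have := nK K; rewrite cK xK /= -ltnNge => hlt.
    have : wsum m'' K <= wsum m' K by apply: sum_le => y _; exact: leq_subr.
    by move=> h; apply: lt_pred; exact: leq_ltn_trans h hlt.
  have : wsum m'' K <= wsum (cov L') K.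
    apply: sum_le => y yK.
    have yx : y != x by apply: contraFN xK => /eqP <-.
    rewrite /m'' yx andbT.
    have := cL y; rewrite covL.
    by case: (y \in A) => /=; rewrite ?subn0 ?subn1 // => h; rewrite -subn1 leq_subLR add1n.
  move/leq_trans; apply.
  apply: leq_trans (sum_cov_clique sL' cK) _.
  by apply: lt_pred; rewrite -szL'.
have summ'' : \sum_y m'' y <= n.
  have h1 : \sum_y m'' y <= \sum_y m' y by apply: leq_sum => y _; exact: leq_subr.
  by rewrite -ltnS; apply: leq_trans hm; apply: leq_trans summ'; rewrite ltnS.
have [L2 [sL2 szL2 cL2]] := IH m'' summ''.
exists (A :: L2); split.
- by rewrite /= sA sL2.
- rewrite /=; apply: leq_trans omono.
  have k0 : 0 < k by apply: leq_trans szL; rewrite szL'.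
  by rewrite -(prednK k0) ltnS (leq_trans szL2 hom).
- move=> y; rewrite /cov /=; case: (eqVneq y x) => [->|yx].
    have := cL2 x; rewrite /m'' eqxx andbF subn0 /cov => h.
    by rewrite mm' eqxx xA addn1 add1n ltnS.
  have := cL2 y; rewrite /m'' yx andbT /cov => h.
  by rewrite mm' (negbTE yx) addn0 -leq_subLR.
Qed.

End R2.

Section C.
Variables (T : finType) (e : rel T).
Hypothesis e_irr : irreflexive e.
Hypothesis e_perf : perfect e.


Lemma stable0 : stable e set0.
Proof. by apply/forallP => x; rewrite inE. Qed.

Lemma clique0 : clique e set0.
Proof. by apply/forallP => x; rewrite inE. Qed.

Lemma stable_sub (I J : {set T}) : J \subset I -> stable e I -> stable e J.
Proof.
move=> /subsetP JI /forallP sI; apply/forallP => x; apply/implyP => xJ.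
have := sI x; rewrite (JI x xJ) /= => /forallP sx.
apply/forallP => y; apply/implyP => yJ.
by have := sx y; rewrite (JI y yJ).
Qed.

Lemma walpha_attained (W : T -> nat) : exists2 I, stable e I & wsum W I = walpha e W.
Proof.
case: (@arg_maxnP _ set0 (stable e) (wsum W) stable0) => I sI hI.
exists I => //; apply/eqP; rewrite eqn_leq (leq_bigmax_cond _ sI) /=.
by apply/bigmax_leqP => J sJ; exact: hI.
Qed.

Lemma sum_in_le1 (K I : {set T}) : clique e K -> stable e I ->
  \sum_(y in K) (y \in I : nat) <= 1.
Proof.
move=> cK sI; apply: leq_trans (clique_stable_card cK sI).
rewrite -sum1_card big_mkcond /= [X in (_ <= X)%N]big_mkcond /=.
apply: leq_sum => y _; rewrite in_setI.
by case: (y \in K); case: (y \in I).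
Qed.

Lemma sum_mul_cov (W : T -> nat) (L : seq {set T}) :
  \sum_y W y * cov L y = \sum_(I <- L) wsum W I.
Proof.
elim: L => [|I L IH].
  by rewrite big_nil big1 // => y _; rewrite muln0.
rewrite big_cons -IH /cov /=.
rewrite (eq_bigr (fun y => W y * (y \in I) + W y * cov L y)); last first.
  by move=> y _; rewrite mulnDr.
rewrite big_split /=; congr (_ + _).
rewrite /wsum [RHS]big_mkcond /=; apply: eq_bigr => y _.
by case: (y \in I); rewrite ?muln1 ?muln0.
Qed.

Lemma sum_stable_le (W : T -> nat) (L : seq {set T}) : all (stable e) L ->
  \sum_(I <- L) wsum W I <= size L * walpha e W.
Proof.
elim: L => [|I L IH]; first by rewrite big_nil.
rewrite big_cons /= mulSn => /andP [sI sL].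
by rewrite leq_add ?IH // (leq_bigmax_cond _ sI).
Qed.

Lemma key_clique (W : T -> nat) x : 0 < W x -> exists K, clique e K /\
  forall I, stable e I -> wsum W I = walpha e W ->
    exists y, [/\ y \in I, y \in K & 0 < W y].
Proof.
move=> Wx.
case: (boolP [exists K, clique e K && [forall I, (stable e I && (wsum W I == walpha e W))
   ==> [exists y, [&& y \in I, y \in K & 0 < W y]]]]).
  move/existsP => [K /andP [cK /forallP hK]]; exists K; split => // I sI wI.
  have := hK I; rewrite sI wI eqxx /= => /existsP [y /and3P [yI yK Wy]].
  by exists y.
rewrite negb_exists => /forallP hK; exfalso.
pose P (K I : {set T}) := [&& stable e I, wsum W I == walpha e W &
   ~~ [exists y, [&& y \in I, y \in K & 0 < W y]]].
pose S (K : {set T}) := odflt set0 [pick I | P K I] :&: [set y | 0 < W y].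
have SK : forall K, clique e K -> [/\ stable e (S K), wsum W (S K) = walpha e W &
    forall y, y \in S K -> y \in K -> False].
  move=> K cK.
  have := hK K; rewrite cK /= negb_forall => /existsP [I].
  rewrite negb_imply => /andP [/andP [sI /eqP wI] nI].
  rewrite /S; case: pickP => [J /and3P [sJ /eqP wJ nJ] | /(_ I)]; last first.
    by rewrite /P sI wI eqxx nI.
  rewrite /=; split.
  - exact: stable_sub (subsetIl _ _) sJ.
  - rewrite -wJ /wsum [RHS](bigID (fun y => 0 < W y)) /= [X in _ + X]big1 ?addn0.
      by apply: eq_bigl => y; rewrite !inE.
    by move=> y /andP [_]; rewrite lt0n negbK => /eqP.
  - move=> y; rewrite !inE => /andP [yJ Wy] yK.
    by move/negP: nJ; apply; apply/existsP; exists y; rewrite yJ yK Wy.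
pose N := \sum_(K | clique e K) 1.
pose m y := \sum_(K | clique e K) (y \in S K : nat).
have [L [sL szL cL]] := replication e_irr e_perf m.
have a0 : 0 < walpha e W.
  apply: leq_trans Wx _; apply: leq_trans (leq_bigmax_cond _ (stable1 e_irr x)).
  by rewrite /wsum big_set1.
have h1 : \sum_y W y * m y <= size L * walpha e W.
  apply: leq_trans (sum_stable_le W sL); rewrite -sum_mul_cov.
  by apply: leq_sum => y _; rewrite leq_mul.
have h2 : \sum_y W y * m y = N * walpha e W.
  rewrite /m (eq_bigr (fun y => \sum_(K | clique e K) W y * (y \in S K))); last first.
    by move=> y _; rewrite big_distrr.
  rewrite exchange_big /N big_distrl /=; apply: eq_bigr => K cK.
  have [_ <- _] := SK K cK; rewrite mul1n /wsum [RHS]big_mkcond /=.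
  by apply: eq_bigr => y _; case: (y \in S K); rewrite ?muln1 ?muln0.
have N0 : 0 < N by rewrite /N (bigD1 set0) ?clique0.
have h3 : womega e m <= N.-1.
  apply/bigmax_leqP => K' cK'; apply: lt_pred.
  rewrite /wsum /m exchange_big /N (bigD1 K') //= [X in _ < X](bigD1 K') //=.
  rewrite big1 ?add0n; last first.
    move=> y yK'; case: (boolP (y \in S K')) => // yS.
    by have [_ _ /(_ y yS yK')] := SK K' cK'.
  rewrite add1n ltnS; apply: leq_sum => K /andP [cK _].
  by apply: sum_in_le1 => //; have [] := SK K cK.
have : N <= size L by rewrite -(leq_pmul2r a0) -h2.
move/leq_trans/(_ (leq_trans szL h3)).
move=> h; have h' : N.-1 < N by rewrite ltn_predL.
by have := leq_ltn_trans h h'; rewrite ltnn.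
Qed.

Lemma clique_cover (W : T -> nat) : exists Ks : seq {set T},
  [/\ all (clique e) Ks, size Ks <= walpha e W & forall x, W x <= cov Ks x].
Proof.
move: {2}(\sum_x W x) (leqnn (\sum_x W x)) => n.
elim: n W => [|n IH] W hW.
  exists [::]; split => // y; rewrite /cov /=.
  by have := leq_trans (le_sumT W y) hW; rewrite leqn0 => /eqP ->.
case: (boolP [forall y, W y == 0]) => [/forallP h0|].
  by exists [::]; split => // y; rewrite (eqP (h0 y)).
rewrite negb_forall => /existsP [x]; rewrite -lt0n => Wx.
have [K [cK hK]] := key_clique Wx.
pose W' y := W y - (y \in K).
have W'le : forall y, W' y <= W y by move=> y; exact: leq_subr.
have [I0 sI0 wI0] := walpha_attained W.
have [y0 [y0I y0K Wy0]] := hK I0 sI0 wI0.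
have W'lt : W' y0 < W y0 by rewrite /W' y0K subn1 prednK.
have sW' : \sum_y W' y <= n.
  by rewrite -ltnS (leq_trans (sum_ltT W'le W'lt) hW).
have a0 : 0 < walpha e W.
  apply: leq_trans Wx _; apply: leq_trans (leq_bigmax_cond _ (stable1 e_irr x)).
  by rewrite /wsum big_set1.
have hA : walpha e W' <= (walpha e W).-1.
  apply/bigmax_leqP => I sI; apply: lt_pred.
  case: (eqVneq (wsum W I) (walpha e W)) => [wI|wI].
    have [y [yI yK Wy]] := hK I sI wI.
    rewrite -wI; apply: sum_lt yI W'le _.
    by rewrite /W' yK subn1 prednK.
  apply: leq_ltn_trans (sum_le (fun y _ => W'le y)) _.
  by rewrite ltn_neqAle wI (leq_bigmax_cond _ sI).
have [Ks [cKs szKs cvKs]] := IH W' sW'.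
exists (K :: Ks); split.
- by rewrite /= cK cKs.
- by rewrite /= -(prednK a0) ltnS (leq_trans szKs hA).
- move=> y; rewrite /cov /= -leq_subLR; exact: cvKs.
Qed.

End C.

Section Final.
Local Open Scope ring_scope.
Variables (T : finType) (e : rel T) (w : T -> rat).
Hypothesis e_irr : irreflexive e.
Hypothesis w_ge0 : forall v, 0 <= w v.

Lemma card_sum (A B : {set T}) : (\sum_(v in A) (v \in B : nat) = #|A :&: B|)%N.
Proof.
rewrite -sum1_card big_mkcond [RHS]big_mkcond /=; apply: eq_bigr => v _.
by rewrite inE; case: (v \in A); case: (v \in B).
Qed.

Lemma maxclique_clique (Q : MC e) : clique e (val Q).
Proof. by case/andP: (valP Q). Qed.

Lemma money_ge (z : MC e -> rat) (I S : {set T}) : lp_feasible w z ->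
  stable e I -> I \subset S -> \sum_(v in I) w v <= money z S.
Proof.
move=> [z0 zc] sI IS.
apply: le_trans (_ : \sum_(v in I) \sum_(Q : MC e) (v \in val Q)%:R * z Q <= _).
  apply: ler_sum => v _; apply: le_trans (zc v) _.
  rewrite [X in X <= _]big_mkcond /=; apply: ler_sum => Q _.
  by case: (v \in val Q); rewrite /= ?mulr1n ?mul1r ?mulr0n ?mul0r.
rewrite exchange_big /= /money [X in _ <= X]big_mkcond /=; apply: ler_sum => Q _.
rewrite -big_distrl /= -natr_sum card_sum.
have h1 := clique_stable_card (maxclique_clique Q) sI.
case: ifP => hQS.
  rewrite setIC; apply: le_trans (ler_wpM2r (z0 Q) (_ : _ <= 1%:R)) _.
    by rewrite ler_nat.
  by rewrite mul1r.
have -> : #|I :&: val Q| = 0%N.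
  apply/eqP; rewrite cards_eq0; apply/eqP/setP => v; rewrite !inE.
  apply/negP => /andP [vI vQ]; move/negbT: hQS; rewrite negbK => /eqP/setP/(_ v).
  by rewrite !inE vQ (subsetP IS v vI).
by rewrite mul0r.
Qed.

Lemma cost_le_money (z : MC e -> rat) (S : {set T}) : lp_feasible w z -> cost e w S <= money z S.
Proof.
move=> hz; rewrite /cost; apply: (big_ind (fun a => a <= money z S)).
- by apply: sumr_ge0 => Q _; exact: hz.1.
- by move=> a b ha hb; rewrite ge_max ha hb.
- by move=> I /andP [sI IS]; exact: money_ge.
Qed.

Lemma money_setT_le (z : MC e -> rat) : lp_feasible w z -> money z setT <= \sum_Q z Q.
Proof.
move=> hz; rewrite /money [X in _ <= X](bigID (fun Q : MC e => val Q :&: setT != set0)) /=.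
by rewrite lerDl sumr_ge0 // => Q _; exact: hz.1.
Qed.

Lemma cost1 v : w v <= cost e w [set v].
Proof.
rewrite /cost (bigD1 [set v]) /=; last by rewrite stable1 // subxx.
by rewrite le_max big_set1 lexx.
Qed.

Lemma money1 (z : MC e -> rat) v : money z [set v] = \sum_(Q : MC e | v \in val Q) z Q.
Proof.
apply: eq_bigl => Q; apply/set0Pn/idP => [[u]|vQ].
  by rewrite !inE => /andP [uQ /eqP <-].
by exists v; rewrite !inE vQ eqxx.
Qed.

Lemma ext_max (K : {set T}) : clique e K -> exists Q : MC e, K \subset val Q.
Proof.
move=> cK.
case: (@arg_maxnP _ K (fun Q => clique e Q && (K \subset Q)) (fun Q => #|Q|)).
  by rewrite cK subxx.
move=> Q /andP [cQ KQ] hQ.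
have mQ : maxclique e Q.
  rewrite /maxclique cQ /=; apply/forallP => v; apply/implyP => vQ; apply/negP => cvQ.
  have := hQ (v |: Q); rewrite cvQ (subset_trans KQ (subsetUr _ _)) /= cardsU1 vQ /=.
  by move=> /(_ isT); rewrite add1n ltnn.
by exists (exist _ Q mQ).
Qed.

Definition ext (K : {set T}) : option (MC e) := [pick Q : MC e | K \subset val Q].

Lemma extP K : clique e K -> exists2 Q, ext K = Some Q & K \subset val Q.
Proof.
move=> cK; rewrite /ext; case: pickP => [Q hQ|h]; first by exists Q.
by have [Q hQ] := ext_max cK; move: (h Q); rewrite hQ.
Qed.

Lemma cover_count (Ks : seq {set T}) v : all (clique e) Ks ->
  (cov Ks v <= \sum_(Q : MC e | v \in val Q) count (fun K => ext K == Some Q) Ks)%N.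
Proof.
elim: Ks => [|K Ks IH] /=; first by [].
move=> /andP [cK cKs]; rewrite /cov /= big_split /= leq_add ?IH //.
case vK: (v \in K) => //.
have [Q0 eQ KQ] := extP cK.
by rewrite (bigD1 Q0) /=; [rewrite eQ eqxx | apply: (subsetP KQ)].
Qed.

Lemma count_total (Ks : seq {set T}) :
  (\sum_(Q : MC e) count (fun K => ext K == Some Q) Ks <= size Ks)%N.
Proof.
elim: Ks => [|K Ks IH] /=; first by rewrite big1.
rewrite big_split /= -add1n leq_add //.
case eK: (ext K) => [Q0|]; last by rewrite big1.
rewrite (bigD1 Q0) //= eqxx big1 // => Q hQ.
apply/eqP; rewrite eqb0; apply/eqP => [[E]]; by rewrite E eqxx in hQ.
Qed.

Lemma scale_nat : exists d : nat, exists W : T -> nat,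
  (0 < d)%N /\ forall v, w v * d%:R = (W v)%:R.
Proof.
exists (\prod_u `|denq (w u)|%N).
exists (fun v => `|numq (w v)|%N * \prod_(u | u != v) `|denq (w u)|)%N.
split.
  by apply: prodn_gt0 => u; rewrite absz_gt0 denq_neq0.
move=> v; rewrite (bigD1 v) //= !natrM mulrA; congr (_ * _).
rewrite !natr_absz !ger0_norm ?numq_ge0 ?(ltW (denq_gt0 _)) //.
by rewrite numqE.
Qed.

Hypothesis e_perf : perfect e.

Lemma strong (y : MC e -> rat) : lp_optimal w y -> \sum_Q y Q <= cost e w setT.
Proof.
move=> [fy opt].
have [d [W [d0 hW]]] := scale_nat.
have [Ks [cKs szKs cvKs]] := clique_cover e_irr e_perf W.
pose c : rat := d%:R^-1.
have c0 : 0 < c by rewrite invr_gt0 ltr0n.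
have wE v : w v = (W v)%:R * c by rewrite -hW mulfK // pnatr_eq0 -lt0n.
pose z (Q : MC e) := (count (fun K => ext K == Some Q) Ks)%:R * c.
have fz : lp_feasible w z.
  split => [Q|v]; first by rewrite mulr_ge0 // ltW.
  rewrite wE /z -mulr_suml -natr_sum ler_pM2r // ler_nat.
  exact: leq_trans (cvKs v) (cover_count v cKs).
apply: le_trans (opt z fz) _.
rewrite /z -mulr_suml -natr_sum.
have [I sI wI] := walpha_attained e W.
apply: le_trans (_ : (wsum W I)%:R * c <= _).
  by rewrite ler_pM2r // ler_nat wI (leq_trans (count_total Ks) szKs).
rewrite /wsum natr_sum mulr_suml (eq_bigr _ (fun v _ => esym (wE v))).
rewrite /cost (bigD1 I) /=; last by rewrite sI subsetT.
by rewrite le_max lexx.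
Qed.

End Final.

Local Open Scope ring_scope.

Theorem theorem17 (T : finType) (e : rel T)
  (e_sym : symmetric e) (e_irr : irreflexive e)
  (e_perf : perfect e)
  (w : T -> rat) (w_ge0 : forall v, 0 <= w v)
  (y : MC e -> rat) :
  (forall Q, 0 <= y Q) ->
  (core_imputation w y <-> lp_optimal w y).
Proof.
move=> y0; split.
- move=> [[_ sy] hc].
  have fy : lp_feasible w y.
    split=> // v; rewrite -money1; apply: le_trans (hc [set v]).
    exact: cost1.
  split=> // z fz; rewrite sy /total.
  exact: le_trans (cost_le_money setT fz) (money_setT_le fz).
- move=> [fy opt]; split; last by move=> S; exact: cost_le_money.
  split=> //; apply/eqP; rewrite eq_le; apply/andP; split.
    exact: (strong e_irr w_ge0 e_perf).
  rewrite /total; exact: le_trans (cost_le_money _ fy) (money_setT_le fy).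
Qed.
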